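(* Let $R$ be a ring and $G$ a group such that the group ring $RG$ is a DT ring, and suppose $2\notin\Delta(R)$ and $3\notin\Delta(R)$. Then $G$ is an elementary abelian $2$-group, i.e. $g^2=1$ for all $g\in G$.
   Context: All rings are associative with identity; $U(R)$ is the group of units. $\Delta(R)=\{x\in R: x+u\in U(R)\text{ for all }u\in U(R)\}$. $\mathrm{Tr}(R)=\{x\in R: x^3=x\}$. A ring $R$ is a DT ring if every $r\in R$ can be written $r=e+d$ with $e\in\mathrm{Tr}(R)$ and $d\in\Delta(R)$. $RG$ denotes the group ring. *)

(* Defs.v *)
From HB Require Import structures.
From mathcomp Require Import all_boot all_order all_algebra.
From mathcomp Require Import finmap.

Set Implicit Arguments.
Unset Strict Implicit.
Unset Printing Implicit Defensive.

Import GRing.Theory.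
Local Open Scope fset_scope.

Section RingNotions.
Variables (T : Type) (add mul : T -> T -> T) (one : T).

Definition is_unit (x : T) : Prop :=
  exists y, mul x y = one /\ mul y x = one.

Definition in_Delta (x : T) : Prop :=
  forall u, is_unit u -> is_unit (add x u).

Definition in_Tr (x : T) : Prop := mul x (mul x x) = x.

Definition is_DT : Prop :=
  forall r, exists e d, in_Tr e /\ in_Delta d /\ r = add e d.
End RingNotions.

Definition Delta_ring (R : nzRingType) (x : R) : Prop :=
  in_Delta (@GRing.add R) (@GRing.mul R) 1%R x.

Section GroupRing.
Variables (R : nzRingType) (G : groupType).

Definition grpring := {fsfun G -> R with 0%R}.

Definition gr_one : grpring :=
  [fsfun g in [fset (1%g : G)] => (1%R : R) | 0%R].

Definition gr_add (a b : grpring) : grpring :=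
  [fsfun g in (finsupp a `|` finsupp b) => (a g + b g)%R | 0%R].

Definition gr_mul (a b : grpring) : grpring :=
  [fsfun g in [fset (x * y)%g | x in finsupp a, y in finsupp b] =>
     (\sum_(x <- finsupp a) a x * b (x^-1 * g)%g)%R | 0%R].

Definition grpring_is_DT : Prop := is_DT gr_add gr_mul gr_one.
End GroupRing.

(* Main.v *)
Require Import Defs.
From HB Require Import structures.
From mathcomp Require Import all_boot all_order all_algebra.
From mathcomp Require Import finmap.
From mathcomp Require Import ring.
From Stdlib Require Classical_Prop.
Set Implicit Arguments.
Unset Strict Implicit.
Unset Printing Implicit Defensive.
Import GRing.Theory.
Local Open Scope fset_scope.
Local Open Scope ring_scope.

Section DeltaT.
Variable T : nzRingType.
Local Notation U x := (is_unit (@GRing.mul T) 1 x).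
Local Notation D x := (in_Delta (@GRing.add T) (@GRing.mul T) 1 x).

Lemma U1 : U 1. Proof. by exists 1; rewrite mulr1. Qed.
Lemma UM x y : U x -> U y -> U (x * y).
Proof.
move=> [x' [h1 h2]] [y' [h3 h4]]; exists (y' * x'); split.
  by rewrite -mulrA (mulrA y) h3 mul1r h1.
by rewrite -mulrA (mulrA x') h2 mul1r h4.
Qed.
Lemma UN x : U x -> U (- x).
Proof. by move=> [x' [h1 h2]]; exists (- x'); rewrite !mulrNN h1 h2. Qed.
Lemma UN1 : U (-1). Proof. exact: UN U1. Qed.

Lemma DU d u : D d -> U u -> U (d + u). Proof. by move=> h; apply: h. Qed.
Lemma DD a b : D a -> D b -> D (a + b).
Proof. by move=> ha hb u hu; rewrite -addrA; apply: ha; apply: hb. Qed.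
Lemma DN a : D a -> D (- a).
Proof.
move=> ha u hu; have := UN (ha _ (UN hu)).
by rewrite opprD opprK.
Qed.
Lemma DB a b : D a -> D b -> D (a - b).
Proof. by move=> ha hb; apply: DD ha (DN hb). Qed.
Lemma D0 : D 0. Proof. by move=> u hu; rewrite add0r. Qed.
Lemma DMn a n : D a -> D (a *+ n).
Proof. by move=> ha; elim: n => [|n ih]; [rewrite mulr0n; exact: D0 | rewrite mulrS; apply: DD]. Qed.

Lemma DUl u d : U u -> D d -> D (u * d).
Proof.
move=> [u' [h1 h2]] hd w hw.
have -> : u * d + w = u * (d + u' * w) by rewrite mulrDr mulrA h1 mul1r.
apply: UM; first by exists u'.
by apply: hd; apply: UM => //; exists u.
Qed.
Lemma DUr u d : U u -> D d -> D (d * u).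
Proof.
move=> [u' [h1 h2]] hd w hw.
have -> : d * u + w = (d + w * u') * u by rewrite mulrDl -mulrA h2 mulr1.
apply: UM; last by exists u'.
by apply: hd; apply: UM => //; exists u.
Qed.
Lemma U1B d : D d -> U (1 - d).
Proof. by move=> hd; rewrite addrC; apply: (DN hd); exact: U1. Qed.

Lemma U1D d : D d -> U (1 + d).
Proof. by move=> hd; rewrite addrC; apply: hd; exact: U1. Qed.


Lemma DM a b : D a -> D b -> D (a * b).
Proof.
move=> ha hb u [v [h1 h2]].
have hc : D (v * a) by apply: DUl => //; exists u.
have -> : a * b + u = u * ((v * a) * (1 + b) + (1 - v * a)).
  rewrite mulrDr mulrBr mulr1 !mulrA h1 mul1r mulrDr mulr1.
  by rewrite [RHS]addrC addrA subrK addrC.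
apply: UM; first by exists v.
apply: DU; first by apply: DUr hc; exact: U1D.
exact: U1B.
Qed.

Lemma DUget d u : D d -> U u -> U (u + d).
Proof. by move=> hd hu; rewrite addrC; apply: hd. Qed.

Lemma tri_sq u e d : U u -> u = e + d -> D d -> e * (e * e) = e -> U e /\ e * e = 1.
Proof.
move=> hu hued hd he.
have Ue : U e by have := DN hd hu; rewrite hued addrC addrK.
split=> //; case: Ue => [v [h1 h2]].
by rewrite -[e * e]mul1r -h2 -mulrA he h2.
Qed.

Lemma sq_D u e d : U u -> u = e + d -> D d -> e * (e * e) = e -> D (u * u - 1).
Proof.
move=> hu hued hd he; have [Ue ee] := tri_sq hu hued hd he.
have -> : u * u - 1 = e * d + d * e + d * d.
  by rewrite hued mulrDl !mulrDr ee [_ - 1]addrC addrA addKr addrA.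
by apply: DD; [apply: DD; [apply: DUl | apply: DUr] | apply: DM].
Qed.


Lemma cfX (x : T) : commr_rmorph (GRing.RMorphism.clone _ _ (intmul (1:T)) _) x.
Proof. move=> a; apply: commrMz; exact: commr1. Qed.

Lemma poly6 (x : T) : 6%:R = (2%:R - x) *+ 11 - ((2%:R - x) * (2%:R - x)) *+ 6
   + (2%:R - x) * ((2%:R - x) * (2%:R - x)) + (x * (x * x) - x).
Proof.
have : horner_morph (cfX x) 6%:R = horner_morph (cfX x) ((2%:R - 'X) *+ 11 - ((2%:R - 'X) * (2%:R - 'X)) *+ 6
   + (2%:R - 'X) * ((2%:R - 'X) * (2%:R - 'X)) + ('X * ('X * 'X) - 'X)).
  by congr horner_morph; ring.
by rewrite !(rmorphB, rmorphM, rmorphD, rmorphMn, rmorph_nat, rmorph1) /= !horner_morphX; apply.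
Qed.

Lemma six_D e d : 2%:R = e + d -> e * (e * e) = e -> D d -> D 6%:R.
Proof.
move=> h he hd; have hde : 2%:R - e = d by rewrite h addrAC subrr add0r.
rewrite (poly6 e) he subrr addr0 hde.
apply: DD; last by apply: DM => //; apply: DM.
by apply: DB; [apply: DMn | apply: DMn; apply: DM].
Qed.


Lemma nil_unit x n : x ^+ n = 0 -> U (1 + x).
Proof.
move=> hx; pose y := - x; pose S := \sum_(i < n) y ^+ i.
have e1 : (y - 1) * S = - 1.
  by rewrite -subrX1 /y exprNn hx mulr0 sub0r.
have cS : GRing.comm (y - 1) S.
  apply: commr_sum => i _; apply: commrX; apply: commr_sym.
  by apply: commrB; [exact: commr_refl | exact: commr1].
have e2 : 1 + x = - (y - 1) by rewrite /y opprB opprK addrC.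
exists (S); rewrite e2 mulNr e1 opprK; split=> //.
by rewrite mulrN -cS e1 opprK.
Qed.

Lemma nat_unit n (y : T) : y * n%:R = 1 -> U n%:R.
Proof. by move=> h; exists y; split=> //; rewrite -(commr_nat y n). Qed.

Lemma D_cancel a b : U a -> D (a * b) -> D b.
Proof.
move=> [v [h1 h2]] hab; have := DUl (ex_intro _ a (conj h2 h1)) hab.
by rewrite mulrA h2 mul1r.
Qed.

Lemma two_nil n : 2%:R ^+ n = 0 :> T -> D 2%:R.
Proof.
move=> h u [v [h1 h2]].
have -> : 2%:R + u = u * (1 + v *+ 2) by rewrite mulrDr mulr1 mulrnAr h1 addrC.
apply: UM; first by exists v.
by apply: (@nil_unit _ n); rewrite exprMn_n -mulr_natr natrX h mulr0.
Qed.


Lemma poly2 (x : T) : (1 - (x - 1)) * (2%:R + x) = 3%:R + (1 - x * x).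
Proof.
have : horner_morph (cfX x) ((1 - ('X - 1)) * (2%:R + 'X)) = horner_morph (cfX x) (3%:R + (1 - 'X * 'X)).
  by congr horner_morph; ring.
by rewrite !(rmorphB, rmorphM, rmorphD, rmorphMn, rmorph_nat, rmorph1) /= !horner_morphX; apply.
Qed.

Lemma poly3 (x : T) : (1 + x * (x - 1)) * (1 + x) = 2%:R + (x * (x * x) - 1).
Proof.
have : horner_morph (cfX x) ((1 + 'X * ('X - 1)) * (1 + 'X)) = horner_morph (cfX x) (2%:R + ('X * ('X * 'X) - 1)).
  by congr horner_morph; ring.
by rewrite !(rmorphB, rmorphM, rmorphD, rmorphMn, rmorph_nat, rmorph1) /= !horner_morphX; apply.
Qed.

Lemma DT_unit_sq (u : T) : U u ->
  (exists e d, e * (e * e) = e /\ D d /\ u = e + d) -> D (u * u - 1).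
Proof. by move=> hu [e [d [he [hd hued]]]]; apply: sq_D hu hued hd he. Qed.

Lemma D_sum (I : Type) (r : seq I) (F : I -> T) : (forall i, D (F i)) -> D (\sum_(i <- r) F i).
Proof. by move=> hF; elim: r => [|a r ih]; rewrite ?big_nil ?big_cons; [exact: D0 | apply: DD]. Qed.

End DeltaT.

Section GR.
Variables (R : nzRingType) (G : groupType).
Local Notation S := (grpring R G).

Lemma fsE (K : {fset G}) (F : G -> R) g :
  ([fsfun x in K => F x | 0] : S) g = if g \in K then F g else 0.
Proof. by rewrite fsfunE. Qed.

Lemma supp0 (a : S) g : g \notin finsupp a -> a g = 0.
Proof. by move=> h; rewrite fsfun_dflt. Qed.

Lemma addE (a b : S) g : gr_add a b g = a g + b g.
Proof.
rewrite /gr_add fsE inE; case: ifP => // /norP[ha hb].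
by rewrite !supp0 // addr0.
Qed.

Lemma collapse (s : {fset G}) (F : G -> R) c :
  \sum_(y <- s) (if y == c then F y else 0) = if c \in s then F c else 0.
Proof.
case: ifP => cs.
  rewrite (big_fsetD1 c) //= eqxx big1_fset ?addr0 // => y.
  by rewrite !inE => /andP[/negPf -> _].
by rewrite big1_fset // => y ys _; case: eqP => // yc; rewrite yc cs in ys.
Qed.

Lemma collapse0 (a : S) (F : G -> R) c :
  \sum_(y <- finsupp a) (if y == c then F y * a y else 0) = F c * a c.
Proof.
rewrite (collapse _ (fun y => F y * a y)); case: ifP => // /negbT h.
by rewrite supp0 // mulr0.
Qed.

Lemma collapse0l (a : S) (F : G -> R) c :
  \sum_(y <- finsupp a) (if y == c then a y * F y else 0) = a c * F c.
Proof.
rewrite (collapse _ (fun y => a y * F y)); case: ifP => // /negbT h.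
by rewrite supp0 // mul0r.
Qed.

Definition dsum (a b : S) g :=
  \sum_(x <- finsupp a) \sum_(y <- finsupp b)
     (if (x * y)%g == g then a x * b y else 0).

Lemma mulE_d (a b : S) g : gr_mul a b g = dsum a b g.
Proof.
rewrite /gr_mul fsE /dsum.
have -> : \sum_(x <- finsupp a) \sum_(y <- finsupp b)
     (if (x * y)%g == g then a x * b y else 0) =
   \sum_(x <- finsupp a) a x * b (x^-1 * g)%g.
  apply: eq_bigr => x _.
  rewrite -(collapse0 b (fun=> a x)); apply: eq_bigr => y _.
  by rewrite -(inj_eq (mulgI (x^-1)%g)) mulKg.
case: ifP => // hg; rewrite big1_fset // => x xa _.
case: (finsuppP b (x^-1 * g)%g) => [|hb]; first by rewrite mulr0.
by move: hg; rewrite -{1}(mulVKg x g) in_imfset2.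
Qed.

Lemma mulE (a b : S) g : gr_mul a b g = \sum_(x <- finsupp a) a x * b (x^-1 * g)%g.
Proof.
rewrite mulE_d; apply: eq_bigr => x _.
rewrite -(collapse0 b (fun=> a x)); apply: eq_bigr => y _.
by rewrite -(inj_eq (mulgI (x^-1)%g)) mulKg.
Qed.

Lemma mulEr (a b : S) g : gr_mul a b g = \sum_(y <- finsupp b) a (g * y^-1)%g * b y.
Proof.
rewrite mulE_d /dsum exchange_big; apply: eq_bigr => y _.
rewrite -(collapse0l a (fun=> b y)); apply: eq_bigr => x _.
by rewrite -(inj_eq (mulIg (y^-1)%g)) mulgK.
Qed.

Definition gr_zero : S := [fsfun x in fset0 => (0:R) | 0].
Definition gr_opp (a : S) : S := [fsfun x in finsupp a => - a x | 0].

Lemma zeroE g : gr_zero g = 0.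
Proof. by rewrite /gr_zero fsfunE; case: (_ \in _). Qed.

Lemma oppE (a : S) g : gr_opp a g = - a g.
Proof. by rewrite /gr_opp fsfunE; case: finsuppP => //; rewrite oppr0. Qed.

Lemma gr_addA : associative (@gr_add R G).
Proof. by move=> a b c; apply/fsfunP => g; rewrite !addE addrA. Qed.
Lemma gr_addC : commutative (@gr_add R G).
Proof. by move=> a b; apply/fsfunP => g; rewrite !addE addrC. Qed.
Lemma gr_add0 : left_id gr_zero (@gr_add R G).
Proof. by move=> a; apply/fsfunP => g; rewrite !addE zeroE add0r. Qed.
Lemma gr_addN : left_inverse gr_zero gr_opp (@gr_add R G).
Proof. by move=> a; apply/fsfunP => g; rewrite !addE zeroE oppE addNr. Qed.

Lemma supp_one : finsupp (gr_one R G) = [fset 1%g].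
Proof.
apply/fsetP => x; rewrite mem_finsupp /gr_one fsfunE !inE.
by case: (x == 1%g); rewrite ?oner_neq0 ?eqxx.
Qed.

Lemma oneE g : gr_one R G g = if g == 1%g then 1 else 0.
Proof. by rewrite /gr_one fsfunE inE. Qed.

Lemma gr_mulA : associative (@gr_mul R G).
Proof.
move=> a b c; apply/fsfunP => g; symmetry.
rewrite [LHS]mulEr [RHS]mulE.
under eq_bigr do rewrite mulE mulr_suml.
rewrite exchange_big /=; apply: eq_bigr => x _.
rewrite mulEr mulr_sumr; apply: eq_bigr => z _.
by rewrite mulrA mulgA.
Qed.

Lemma gr_mul1 : left_id (gr_one R G) (@gr_mul R G).
Proof.
by move=> a; apply/fsfunP => g; rewrite mulE supp_one big_seq_fset1 oneE eqxx mul1r invg1 mul1g.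
Qed.

Lemma gr_mulr1 : right_id (gr_one R G) (@gr_mul R G).
Proof.
by move=> a; apply/fsfunP => g; rewrite mulEr supp_one big_seq_fset1 oneE eqxx mulr1 invg1 mulg1.
Qed.

Lemma gr_mulDl : left_distributive (@gr_mul R G) (@gr_add R G).
Proof.
move=> a b c; apply/fsfunP => g; rewrite addE !mulEr -big_split /=.
by apply: eq_bigr => z _; rewrite addE mulrDl.
Qed.

Lemma gr_mulDr : right_distributive (@gr_mul R G) (@gr_add R G).
Proof.
move=> a b c; apply/fsfunP => g; rewrite addE !mulE -big_split /=.
by apply: eq_bigr => z _; rewrite addE mulrDr.
Qed.

Lemma gr_one_neq0 : gr_one R G != gr_zero.
Proof.
apply/eqP => h; have := congr1 (fun f : S => f 1%g) h.
by rewrite oneE eqxx zeroE; apply/eqP; rewrite oner_neq0.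
Qed.

HB.instance Definition _ := Choice.on S.
HB.instance Definition _ := GRing.isZmodule.Build S gr_addA gr_addC gr_add0 gr_addN.
HB.instance Definition _ := GRing.Zmodule_isNzRing.Build S gr_mulA gr_mul1 gr_mulr1 gr_mulDl gr_mulDr gr_one_neq0.


Local Notation US x := (is_unit (@GRing.mul S) 1 x).
Local Notation DS x := (in_Delta (@GRing.add S) (@GRing.mul S) 1 x).
Local Notation UR x := (is_unit (@GRing.mul R) 1 x).
Local Notation DR x := (in_Delta (@GRing.add R) (@GRing.mul R) 1 x).

Definition dl (k : G) : S := [fsfun x in [fset k] => (1:R) | 0].
Definition io (r : R) : S := [fsfun x in [fset 1%g] => r | 0].

Lemma dlE k g : dl k g = if g == k then 1 else 0.
Proof. by rewrite /dl fsfunE inE. Qed.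
Lemma ioE r g : io r g = if g == 1%g then r else 0.
Proof. by rewrite /io fsfunE inE. Qed.

Lemma one1 g : (1 : S) g = if g == 1%g then 1 else 0.
Proof. exact: oneE. Qed.

Lemma mulE_sub (a b : S) (A : {fset G}) g : finsupp a `<=` A ->
  (a * b) g = \sum_(x <- A) a x * b (x^-1 * g)%g.
Proof.
move=> sA; rewrite /GRing.mul /= mulE; apply: big_fset_incl => // x _ xn.
by rewrite supp0 // mul0r.
Qed.

Lemma mulEr_sub (a b : S) (A : {fset G}) g : finsupp b `<=` A ->
  (a * b) g = \sum_(y <- A) a (g * y^-1)%g * b y.
Proof.
move=> sA; rewrite /GRing.mul /= mulEr; apply: big_fset_incl => // x _ xn.
by rewrite (supp0 xn) mulr0.
Qed.

Lemma supp_dl k : finsupp (dl k) `<=` [fset k].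
Proof. by apply/fsubsetP => x; rewrite mem_finsupp dlE inE; case: (x == k); rewrite ?eqxx. Qed.
Lemma supp_io r : finsupp (io r) `<=` [fset 1%g].
Proof. by apply/fsubsetP => x; rewrite mem_finsupp ioE inE; case: (x == 1%g); rewrite ?eqxx. Qed.

Lemma dlMz k (z : S) g : (dl k * z) g = z (k^-1 * g)%g.
Proof. by rewrite (mulE_sub _ _ (supp_dl k)) big_seq_fset1 dlE eqxx mul1r. Qed.
Lemma zMdl k (z : S) g : (z * dl k) g = z (g * k^-1)%g.
Proof. by rewrite (mulEr_sub _ _ (supp_dl k)) big_seq_fset1 dlE eqxx mulr1. Qed.
Lemma ioMz r (z : S) g : (io r * z) g = r * z g.
Proof. by rewrite (mulE_sub _ _ (supp_io r)) big_seq_fset1 ioE eqxx invg1 mul1g. Qed.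
Lemma zMio r (z : S) g : (z * io r) g = z g * r.
Proof. by rewrite (mulEr_sub _ _ (supp_io r)) big_seq_fset1 ioE eqxx invg1 mulg1. Qed.

Lemma addSE (a b : S) g : (a + b) g = a g + b g.
Proof. exact: addE. Qed.
Lemma oppSE (a : S) g : (- a) g = - a g.
Proof. exact: oppE. Qed.
Lemma subSE (a b : S) g : (a - b) g = a g - b g.
Proof. by rewrite addSE oppSE. Qed.

Lemma dlM k l : dl k * dl l = dl (k * l)%g.
Proof.
apply/fsfunP => g; rewrite dlMz !dlE.
by rewrite -(inj_eq (mulgI k)) mulVKg.
Qed.
Lemma dl1 : dl 1%g = 1. Proof. by []. Qed.

Lemma U_dl k : US (dl k).
Proof. by exists (dl k^-1); rewrite !dlM mulgV mulVg. Qed.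

Lemma ioD a b : io (a + b) = io a + io b.
Proof. by apply/fsfunP => g; rewrite addSE !ioE; case: eqP; rewrite ?addr0. Qed.
Lemma ioM a b : io a * io b = io (a * b).
Proof. by apply/fsfunP => g; rewrite ioMz !ioE; case: eqP; rewrite ?mulr0. Qed.
Lemma io1 : io 1 = 1. Proof. by []. Qed.
Lemma io_nat n : io n%:R = n%:R.
Proof.
elim: n => [|n ih]; first by apply/fsfunP => g; rewrite ioE zeroE; case: eqP.
by rewrite !mulrS ioD ih.
Qed.
Lemma natSE n g : (n%:R : S) g = if g == 1%g then n%:R else 0.
Proof. by rewrite -io_nat ioE. Qed.

Lemma U_io r : UR r -> US (io r).
Proof. by move=> [v [h1 h2]]; exists (io v); rewrite !ioM h1 h2. Qed.
Lemma U_io_inv r : US (io r) -> UR r.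
Proof.
move=> [z [h1 h2]]; exists (z 1%g); split.
  by have := congr1 (fun f : S => f 1%g) h1; rewrite ioMz one1 eqxx.
by have := congr1 (fun f : S => f 1%g) h2; rewrite zMio one1 eqxx.
Qed.

Hypothesis hDT : grpring_is_DT R G.

Lemma DTS (r : S) : exists e d, e * (e * e) = e /\ DS d /\ r = e + d.
Proof. exact: hDT r. Qed.

Lemma six_S : DS 6%:R.
Proof. by have [e [d [he [hd h2]]]] := DTS 2%:R; apply: six_D h2 he hd. Qed.

Lemma six_R : DR 6%:R.
Proof.
move=> w hw; apply: U_io_inv; rewrite ioD io_nat.
by apply: six_S; apply: U_io.
Qed.

Lemma sq_S k : DS (dl (k * k)%g - 1).
Proof. by rewrite -dlM; apply: DT_unit_sq (U_dl k) (DTS _). Qed.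

Lemma pow_D h : DS (dl h - 1) -> forall j, DS (dl (h ^+ j)%g - 1).
Proof.
move=> hh; elim=> [|j ih]; first by rewrite expg0 dl1 subrr; exact: D0.
have -> : dl (h ^+ j.+1)%g - 1 = dl h * (dl (h ^+ j)%g - 1) + (dl h - 1).
  by rewrite expgS -dlM mulrBr mulr1 addrA subrK.
by apply: DD => //; apply: DUl (U_dl h) ih.
Qed.

Lemma case2 k : ~ DR 2%:R -> k != 1%g -> (k * k = 1)%g -> DS (dl k - 1) -> False.
Proof.
move=> n2 k1 kk hk; have [z [h1 h2]] := U1B hk.
have e3 := poly2 (dl k); rewrite dlM kk dl1 subrr addr0 in e3.
have ez : z * 3%:R = 2%:R + dl k by rewrite -e3 mulrA h2 mul1r.
have := congr1 (fun f : S => f k) ez.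
rewrite -(io_nat 3) zMio addSE natSE dlE eqxx (negbTE k1) add0r => hz.
apply: n2; apply: (@D_cancel _ 3%:R); first exact: nat_unit hz.
by rewrite -natrM; exact: six_R.
Qed.

Lemma case3 k : ~ DR 3%:R -> k != 1%g -> (k * (k * k) = 1)%g -> DS (dl k - 1) -> False.
Proof.
move=> n3 k1 kk hk.
have [z [h1 h2]] := U1D (DUl (U_dl k) hk).
have e3 := poly3 (dl k); rewrite !dlM kk dl1 subrr addr0 in e3.
have ez : z * 2%:R = 1 + dl k by rewrite -e3 mulrA h2 mul1r.
have := congr1 (fun f : S => f k) ez.
rewrite -(io_nat 2) zMio addSE one1 dlE eqxx (negbTE k1) add0r => hz.
apply: n3; apply: (@D_cancel _ 2%:R); first exact: nat_unit hz.
by rewrite -natrM; exact: six_R.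
Qed.

Lemma caseN h n : h != 1%g -> (h ^+ n = 1)%g -> (n %% 6 == 1)%N || (n %% 6 == 5)%N ->
  DS (dl h - 1) -> False.
Proof.
move=> h1 hn n6 hh.
pose N := \sum_(0 <= i < n) dl (h ^+ i)%g.
have tel : N * (dl h - 1) = 0.
  rewrite /N mulr_suml.
  under eq_bigr => i _ do rewrite mulrBr mulr1 dlM -expgSr.
  by rewrite telescope_sumr // hn expg0 subrr.
have hX : DS (N - n%:R).
  have -> : N - n%:R = \sum_(0 <= i < n) (dl (h ^+ i)%g - 1).
    by rewrite sumrB sumr_const_nat subn0.
  by apply: D_sum => i; exact: pow_D hh i.
have eN : N = n%:R + (N - n%:R) by rewrite addrC subrK.
have qe := divn_eq n 6.
have UN : US N.
  case/orP: n6 => /eqP r.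
    have hn' : n%:R = 1 + 6%:R *+ (n %/ 6) :> S.
      by rewrite {1}qe r natrD addrC natrM mulr_natl.
    rewrite eN {1}hn' -addrA; apply: U1D; apply: DD => //.
    by apply: DMn; exact: six_S.
  have hn' : n%:R = 6%:R *+ (n %/ 6).+1 - 1 :> S.
    have : (n + 1 = (n %/ 6).+1 * 6)%N by rewrite {1}qe r mulSn -addnA addnC.
    move/(congr1 (fun m => m%:R : S)); rewrite natrD natrM mulr_natl => <-.
    by rewrite addrK.
  rewrite eN {1}hn' addrAC; apply: DU; last exact: UN1.
  by apply: DD => //; apply: DMn; exact: six_S.
case: UN => v [h1' h2'].
have : dl h - 1 = 0 by have := congr1 (fun t => v * t) tel; rewrite mulrA h2' mul1r mulr0.
move/(congr1 (fun f : S => f h)); rewrite subSE dlE eqxx one1 (negbTE h1) subr0 zeroE.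
by move/eqP; rewrite oner_eq0.
Qed.

Lemma pigeon (f : nat -> G) : injective f -> forall A : {fset G},
  exists J, (0 < J)%N /\ f J \notin A.
Proof.
move=> fi A; pose s := iota 1 (#|` A|).+1.
case/boolP: (has (fun J => f J \notin A) s) => [/hasP[J Js JA]|hn].
  by exists J; split=> //; move: Js; rewrite mem_iota => /andP[].
exfalso; have sub : {subset map f s <= A}.
  move=> y /mapP[J Js ->]; move/hasPn: hn => /(_ J Js); exact: negbNE.
have u : uniq (map f s) by rewrite map_inj_uniq // iota_uniq.
have := uniq_leq_size u sub.
by rewrite size_map size_iota ltnn.
Qed.

Lemma inj_pow (x : G) : (forall n, (0 < n)%N -> (x ^+ n)%g != 1%g) -> injective (fun n => (x ^+ n)%g).
Proof.
move=> hx i j; wlog ij : i j / (i <= j)%N => [w|] e.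
  by case: (leqP i j) => [ij|/ltnW ji]; [apply: w | symmetry; apply: w].
have : (x ^+ i * x ^+ (j - i) = x ^+ i * 1)%g by rewrite -expgnDr subnKC // mulg1.
move/mulgI => e1; case: (posnP (j - i)) => [|p].
  by move/eqP; rewrite subn_eq0 => ji; apply/eqP; rewrite eqn_leq ij.
by move: (hx _ p); rewrite e1 eqxx.
Qed.

Lemma caseInf h : ~ DR 2%:R -> (forall n, (0 < n)%N -> (h ^+ n)%g != 1%g) ->
  DS (dl h - 1) -> False.
Proof.
move=> n2 hinf hh.
have [z [h1 h2]] := U1B hh.
have eq y : 2%:R * z y - z (h^-1 * y)%g = (if y == 1%g then 1 else 0).
  have := congr1 (fun f : S => f y) h1.
  rewrite (_ : 1 - (dl h - 1) = 2%:R - dl h); last by rewrite opprB addrA.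
  by rewrite mulrBl subSE -(io_nat 2) ioMz dlMz one1.
have pos j : z (h ^+ j)%g = 2%:R * z (h ^+ j.+1)%g.
  have := eq (h ^+ j.+1)%g; rewrite (negbTE (hinf j.+1 isT)).
  rewrite [in z (_ * _)%g]expgS mulKg => /eqP; rewrite subr_eq0 => /eqP ->.
  by [].
have [J [J0 hJ]] := pigeon (inj_pow hinf) (finsupp z).
have zJ : z (h ^+ J)%g = 0 := supp0 hJ.
have z1 : z 1%g = 0.
  have : forall m, (m <= J)%N -> z (h ^+ (J - m))%g = 0.
    elim=> [|m ih] hm; first by rewrite subn0.
    by rewrite pos subnSK // ih ?mulr0 // ltnW.
  by move/(_ J (leqnn J)); rewrite subnn expg0.
have hinfi n : (0 < n)%N -> ((h^-1) ^+ n)%g != 1%g.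
  by move=> n0; rewrite expVgn invg_eq1; apply: hinf.
have neg j : z ((h^-1) ^+ j.+2)%g = 2%:R * z ((h^-1) ^+ j.+1)%g.
  have := eq ((h^-1) ^+ j.+1)%g; rewrite (negbTE (hinfi j.+1 isT)) -expgS.
  by move/eqP; rewrite subr_eq0 => /eqP.
have zhi : z (h^-1)%g = -1.
  have := eq 1%g; rewrite eqxx z1 mulr0 sub0r mulg1 => /eqP.
  by rewrite eqr_oppLR => /eqP.
have negv j : z ((h^-1) ^+ j.+1)%g = - (2%:R ^+ j).
  elim: j => [|j ih]; first by rewrite expg1 zhi expr0.
  by rewrite neg ih exprS mulrN.
have [J' [J'0 hJ']] := pigeon (inj_pow hinfi) (finsupp z).
move: (supp0 hJ'); rewrite -(prednK J'0) negv => /eqP; rewrite oppr_eq0 => /eqP h2n.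
by apply: n2; exact: two_nil h2n.
Qed.

Lemma n_cases n : [|| (2 %| n)%N, (3 %| n)%N, (n %% 6 == 1)%N | (n %% 6 == 5)%N].
Proof.
have : (n %% 6 < 6)%N by rewrite ltn_mod.
have := divn_eq n 6.
case: (n %% 6)%N => [|[|[|[|[|[|r]]]]]] // e _.
all: rewrite e ?dvdn_addr ?dvdn_mull //.
Qed.

Lemma main_sec : ~ DR 2%:R -> ~ DR 3%:R -> forall g : G, (g * g = 1)%g.
Proof.
move=> n2 n3 g; set h := (g * g)%g.
case: (eqVneq h 1%g) => // h1; exfalso.
have hh : DS (dl h - 1) := sq_S g.
have [hex|hnex] := Classical_Prop.classic (exists n, (0 < n)%N && (h ^+ n == 1)%g).
  case: (ex_minnP hex) => n /andP[n0 /eqP hn] nmin.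
  have nmin' m : (0 < m)%N -> (m < n)%N -> (h ^+ m)%g != 1%g.
    move=> m0 mn; apply/negP => /eqP e.
    by have := nmin m; rewrite m0 e eqxx => /(_ isT); rewrite leqNgt mn.
  have powD := pow_D hh.
  case/or4P: (n_cases n) => [d2|d3|/eqP r1|/eqP r5].
  - have q0 : (0 < n %/ 2)%N.
      by rewrite divn_gt0 //; apply: dvdn_leq.
    have k1 := nmin' _ q0 (ltn_Pdiv (isT : (1 < 2)%N) n0).
    apply: (case2 n2 k1 _ (powD (n %/ 2)%N)).
    by rewrite -expgnDr addnn -muln2 divnK.
  - have q0 : (0 < n %/ 3)%N.
      by rewrite divn_gt0 //; apply: dvdn_leq.
    have k1 := nmin' _ q0 (ltn_Pdiv (isT : (1 < 3)%N) n0).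
    apply: (case3 n3 k1 _ (powD (n %/ 3)%N)).
    rewrite -!expgnDr; set q := (n %/ 3)%N; rewrite -hn -(divnK d3) -/q. by rewrite mulnC !mulSn mul0n addn0.
  - by apply: (caseN h1 hn _ hh); rewrite r1.
  - by apply: (caseN h1 hn _ hh); rewrite r5 orbT.
apply: (caseInf n2 _ hh) => n n0; apply/negP => /eqP e.
by apply: hnex; exists n; rewrite n0 e eqxx.
Qed.
End GR.

Theorem theorem3p9 (R : nzRingType) (G : groupType) :
  grpring_is_DT R G ->
  ~ Delta_ring (2%:R : R) ->
  ~ Delta_ring (3%:R : R) ->
  forall g : G, (g * g = 1)%g.
Proof. by move=> hDT n2 n3 g; apply: (main_sec hDT). Qed.
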